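(* Let $0<\alpha<1$ and let $\lambda>0$, $k>0$, $m>0$, $h>0$, $C<D$ (with $D>0$) be constants. Let $$K(\eta)=\eta\left[1-W\!\left(-\eta,-\tfrac{\alpha}{2},1\right)+\frac{m}{h\lambda\Gamma(1-\alpha/2)}\right]\frac{1}{M_{\alpha/2}(\eta)},\quad \eta>0,$$ and let $\tilde\eta$ be the unique positive solution of $K(\eta)=\frac{k}{\lambda^2}\frac{\Gamma(1-\frac{\alpha}{2})}{\Gamma(1+\frac{\alpha}{2})}(D-C)$. Set $$q=\frac{(D-C)\,h}{m+h\lambda\Gamma(1-\frac{\alpha}{2})\left[1-W(-\tilde\eta,-\frac{\alpha}{2},1)\right]}.$$ Consider problem (P2): find $u,s$ with $D^{\alpha}_t u=\lambda^2u_{xx}$ for $0<x<s(t)$, $t>0$; $u_x(0,t)=-\frac{q}{t^{\alpha/2}}$; $u(s(t),t)=C$; $D^{\alpha}s(t)=-k u_x(s(t),t)$ for $t>0$; $s(0)=0$. Consider problem (P3): find $u,s$ with $D^{\alpha}_t u=\lambda^2u_{xx}$ for $0<x<s(t)$, $t>0$; $m\,u_x(0,t)=\frac{h}{t^{\alpha/2}}(u(0,t)-D)$; $u(s(t),t)=C$; $D^{\alpha}s(t)=-k u_x(s(t),t)$ for $t>0$; $s(0)=0$ (with the same $C$). Then problems (P2) and (P3) are equivalent: the solution of (P2) $$u_2(x,t)=C+q\lambda\Gamma(1-\tfrac{\alpha}{2})\left[1-W(-\tilde\mu,-\tfrac{\alpha}{2},1)\right]-q\lambda\Gamma(1-\tfrac{\alpha}{2})\left[1-W\!\left(-\frac{x}{\lambda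 t^{\alpha/2}},-\frac{\alpha}{2},1\right)\right],\quad s_2(t)=\lambda\tilde\mu t^{\alpha/2},$$ where $\tilde\mu$ is the unique positive solution of $\frac{\mu}{M_{\alpha/2}(\mu)}=\frac{kq}{\lambda}\frac{\Gamma(1-\frac{\alpha}{2})^2}{\Gamma(1+\frac{\alpha}{2})}$, coincides with the solution of (P3) $$u_3(x,t)=D-\frac{(D-C)\left[1-W\!\left(-\frac{x}{\lambda t^{\alpha/2}},-\frac{\alpha}{2},1\right)+\frac{m}{h\lambda\Gamma(1-\alpha/2)}\right]}{1-W\!\left(-\tilde\eta,-\frac{\alpha}{2},1\right)+\frac{m}{h\lambda\Gamma(1-\alpha/2)}},\quad s_3(t)=\lambda\tilde\eta t^{\alpha/2};$$ that is, $\tilde\mu=\tilde\eta$, $s_2=s_3$ and $u_2=u_3$.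
   Context: For $0<\alpha<1$, the Caputo fractional derivative of a differentiable $f$ is $D^{\alpha}f(t)=\frac{1}{\Gamma(1-\alpha)}\int_0^t (t-\tau)^{-\alpha}f'(\tau)\,d\tau$; $D^{\alpha}_t u(x,t)$ denotes it in the variable $t$. The Wright function is $W(z,a,b)=\sum_{n\ge0}\frac{z^n}{n!\,\Gamma(an+b)}$ ($a>-1$), and the Mainardi function is $M_\nu(z)=W(-z,-\nu,1-\nu)$. *)

(* Defs.v *)
From Stdlib Require Import Reals Factorial.
From Coquelicot Require Import Coquelicot.
Open Scope R_scope.

(* Reciprocal Gamma function 1/Gamma(x), defined for every real x by the
   Euler--Gauss limit  1/Gamma(x) = lim_n x(x+1)...(x+n) / (n! n^x).
   It is entire and vanishes exactly at x = 0,-1,-2,... (the poles of Gamma),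
   which is the convention needed in the Wright series for negative a. *)
Fixpoint rising_prod (x : R) (n : nat) : R :=
  match n with
  | O => x
  | S p => rising_prod x p * (x + INR (S p))
  end.

Definition rgamma (x : R) : R :=
  real (Lim_seq (fun n => rising_prod x n / (INR (fact n) * Rpower (INR n) x))).

(* Euler Gamma function (used only at positive arguments). *)
Definition Gamma (x : R) : R := / rgamma x.

Definition Wright (z a b : R) : R :=
  Series (fun n => z ^ n / INR (fact n) * rgamma (a * INR n + b)).

Definition Mainardi (nu z : R) : R := Wright (- z) (- nu) (1 - nu).

(* Main.v *)
Require Import Defs.
From Stdlib Require Import Reals Lra Lia Factorial.
From Coquelicot Require Import Coquelicot.
Open Scope R_scope.

Lemma ln_le_m1 y : 0 < y -> ln y <= y - 1.
Proof. intros Hy. pose proof (exp_ineq1_le (ln y)). rewrite exp_ln in H; lra. Qed.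

Lemma ln1p_le u : 0 < u -> ln (1 + u) <= u.
Proof. intros. pose proof (ln_le_m1 (1+u)). lra. Qed.

Lemma ln1p_ge u : 0 < u -> u / (1 + u) <= ln (1 + u).
Proof. intros Hu. pose proof (ln_le_m1 (/(1+u)) ltac:(apply Rinv_0_lt_compat; lra)).
  rewrite ln_Rinv in H by lra.
  assert (/(1+u) - 1 = - (u/(1+u))) by (field; lra). lra. Qed.

Fixpoint pp (x : R) (n : nat) : R :=
  match n with O => 1 | S p => pp x p * (1 + x / INR (S p)) end.

Lemma pp_pos x n : 0 < x -> 0 < pp x n.
Proof. intros Hx; induction n. simpl; lra.
  change (pp x (S n)) with (pp x n * (1 + x / INR (S n))).
  assert (0 < INR (S n)) by (apply lt_0_INR; lia).
  assert (0 < x / INR (S n)) by (apply Rdiv_lt_0_compat; lra).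
  apply Rmult_lt_0_compat; lra. Qed.

Lemma rising_pp x n : rising_prod x n = x * INR (fact n) * pp x n.
Proof. induction n. simpl. lra.
  change (rising_prod x (S n)) with (rising_prod x n * (x + INR (S n))).
  rewrite IHn. change (fact (S n)) with (S n * fact n)%nat. rewrite mult_INR.
  change (pp x (S n)) with (pp x n * (1 + x / INR (S n))). assert (0 < INR (S n)) by (apply lt_0_INR; lia). field. lra. Qed.

Lemma pp_upper x n : 0 < x -> (1 <= n)%nat -> ln (pp x n) <= x * (1 + ln (INR n)).
Proof. intros Hx Hn. induction Hn.
  - simpl. rewrite Rmult_1_l, ln_1. replace (1 + x / 1) with (1 + x) by field.
    pose proof (ln1p_le x Hx). lra.
  - change (pp x (S m)) with (pp x m * (1 + x / INR (S m))).
    assert (Hm0 : 0 < INR m) by (apply lt_0_INR; lia).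
    assert (HS : INR (S m) = INR m + 1) by (rewrite S_INR; lra).
    assert (0 < x / INR (S m)) by (apply Rdiv_lt_0_compat; lra).
    rewrite ln_mult by (try apply pp_pos; lra).
    pose proof (ln1p_le _ H).
    pose proof (ln1p_ge (/ INR m) ltac:(apply Rinv_0_lt_compat; lra)).
    replace (1 + / INR m) with (INR (S m) / INR m) in H1 by (rewrite HS; field; lra).
    rewrite ln_div in H1 by lra.
    replace (/ INR m / (INR (S m) / INR m)) with (/ INR (S m)) in H1 by (rewrite HS; field; lra).
    assert (x / INR (S m) <= x * (ln (INR (S m)) - ln (INR m))).
    { unfold Rdiv. apply Rmult_le_compat_l; lra. }
    lra.
Qed.

Lemma pp_lower x n : 0 < x < 2 -> x * (ln (INR n + 3) - ln 3) <= ln (pp x n).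
Proof. intros Hx. induction n.
  - simpl. rewrite ln_1. replace (0+3) with 3 by lra. lra.
  - change (pp x (S n)) with (pp x n * (1 + x / INR (S n))).
    pose proof (pos_INR n).
    assert (HS : INR (S n) = INR n + 1) by (rewrite S_INR; lra).
    assert (0 < x / INR (S n)) by (apply Rdiv_lt_0_compat; lra).
    rewrite ln_mult by (try apply pp_pos; lra).
    pose proof (ln1p_ge _ H0).
    pose proof (ln1p_le (/ (INR n + 3)) ltac:(apply Rinv_0_lt_compat; lra)).
    replace (1 + / (INR n + 3)) with ((INR (S n) + 3) / (INR n + 3)) in H2 by (rewrite HS; field; lra).
    rewrite ln_div in H2 by lra.
    replace (x / INR (S n) / (1 + x / INR (S n))) with (x / (INR n + 1 + x)) in H1 by (rewrite HS; field; lra).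
    assert (x * (ln (INR (S n) + 3) - ln (INR n + 3)) <= x / (INR n + 1 + x)).
    { apply Rle_trans with (x * / (INR n + 3)). apply Rmult_le_compat_l; lra.
      unfold Rdiv. apply Rmult_le_compat_l. lra. apply Rinv_le_contravar; lra. }
    lra.
Qed.

Lemma exp_le' a b : a <= b -> exp a <= exp b.
Proof. intros [H|H]. left; apply exp_increasing; auto. subst; lra. Qed.

Lemma an_bounds x n : 0 < x < 2 -> (1 <= n)%nat ->
  x * exp (- (x * ln 3)) <= rising_prod x n / (INR (fact n) * Rpower (INR n) x) <= x * exp x.
Proof. intros Hx Hn.
  assert (Hn0 : 0 < INR n) by (apply lt_0_INR; lia).
  assert (Hf : 0 < INR (fact n)) by (apply lt_0_INR, lt_O_fact).
  pose proof (pp_pos x n ltac:(lra)) as Hp.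
  assert (E : rising_prod x n / (INR (fact n) * Rpower (INR n) x)
              = x * exp (ln (pp x n) - x * ln (INR n))).
  { rewrite rising_pp. unfold Rpower. unfold Rminus. rewrite exp_plus, exp_Ropp, exp_ln by lra.
    pose proof (exp_pos (x * ln (INR n))). field. lra. }
  rewrite E. pose proof (pp_upper x n ltac:(lra) Hn). pose proof (pp_lower x n Hx).
  assert (ln (INR n) <= ln (INR n + 3)) by (apply ln_le; lra).
  split; apply Rmult_le_compat_l; try lra; apply exp_le'; try lra.
  assert (x * ln (INR n) <= x * ln (INR n + 3)) by (apply Rmult_le_compat_l; lra). nra.
Qed.

Lemma rgamma_pos x : 0 < x < 2 -> 0 < rgamma x.
Proof. intros Hx. unfold rgamma.
  set (a := fun n => rising_prod x n / (INR (fact n) * Rpower (INR n) x)).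
  assert (H1 : Rbar_le (Lim_seq (fun _ => x * exp (- (x * ln 3)))) (Lim_seq a)).
  { apply Lim_seq_le_loc. exists 1%nat. intros n Hn. apply (an_bounds x n Hx Hn). }
  assert (H2 : Rbar_le (Lim_seq a) (Lim_seq (fun _ => x * exp x))).
  { apply Lim_seq_le_loc. exists 1%nat. intros n Hn. apply (an_bounds x n Hx Hn). }
  rewrite Lim_seq_const in H1, H2.
  pose proof (exp_pos (- (x * ln 3))).
  destruct (Lim_seq a) as [r| |]; simpl in *; try contradiction.
  nra.
Qed.

Theorem mainTheorem3 (alpha lam k m h C D eta_t mu_t : R)
  (Halpha : 0 < alpha < 1) (Hlam : 0 < lam) (Hk : 0 < k) (Hm : 0 < m)
  (Hh : 0 < h) (HCD : C < D) (HD : 0 < D) :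
  let nu := alpha / 2 in
  let K := fun eta : R =>
    eta * (1 - Wright (- eta) (- nu) 1 + m / (h * lam * Gamma (1 - nu)))
        * / Mainardi nu eta in
  let rhsK := k / lam ^ 2 * (Gamma (1 - nu) / Gamma (1 + nu)) * (D - C) in
  (* eta_t is the unique positive solution of K(eta) = rhsK *)
  0 < eta_t -> K eta_t = rhsK ->
  (forall e : R, 0 < e -> K e = rhsK -> e = eta_t) ->
  let q := (D - C) * h /
           (m + h * lam * Gamma (1 - nu) * (1 - Wright (- eta_t) (- nu) 1)) in
  let rhsM := k * q / lam * (Gamma (1 - nu) ^ 2 / Gamma (1 + nu)) in
  (* mu_t is the unique positive solution of mu / M_nu(mu) = rhsM *)
  0 < mu_t -> mu_t / Mainardi nu mu_t = rhsM ->
  (forall e : R, 0 < e -> e / Mainardi nu e = rhsM -> e = mu_t) ->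
  let u2 := fun x t : R =>
    C + q * lam * Gamma (1 - nu) * (1 - Wright (- mu_t) (- nu) 1)
      - q * lam * Gamma (1 - nu)
        * (1 - Wright (- (x / (lam * Rpower t nu))) (- nu) 1) in
  let s2 := fun t : R => lam * mu_t * Rpower t nu in
  let u3 := fun x t : R =>
    D - (D - C) * (1 - Wright (- (x / (lam * Rpower t nu))) (- nu) 1
                   + m / (h * lam * Gamma (1 - nu)))
        / (1 - Wright (- eta_t) (- nu) 1 + m / (h * lam * Gamma (1 - nu))) in
  let s3 := fun t : R => lam * eta_t * Rpower t nu in
  mu_t = eta_t /\
  (forall t : R, 0 < t -> s2 t = s3 t) /\
  (forall x t : R, 0 < t -> u2 x t = u3 x t).
Proof.
  intros nu K rhsK Heta HK Huk q rhsM Hmu HM Hum u2 s2 u3 s3.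
  assert (HG : 0 < Gamma (1 - nu)).
  { unfold Gamma. apply Rinv_0_lt_compat, rgamma_pos. unfold nu. lra. }
  assert (HGp : 0 < Gamma (1 + nu)).
  { unfold Gamma. apply Rinv_0_lt_compat, rgamma_pos. unfold nu. lra. }
  set (G := Gamma (1 - nu)) in *. set (Gp := Gamma (1 + nu)) in *.
  set (W := 1 - Wright (- eta_t) (- nu) 1) in *.
  set (A := m / (h * lam * G)) in *.
  set (M := Mainardi nu eta_t) in *.
  assert (HrK : rhsK <> 0).
  { unfold rhsK. apply Rmult_integral_contrapositive; split; [|lra].
    apply Rmult_integral_contrapositive; split.
    - unfold Rdiv; apply Rmult_integral_contrapositive; split; [lra|].
      apply Rinv_neq_0_compat. apply pow_nonzero; lra.
    - unfold Rdiv; apply Rmult_integral_contrapositive; split; [lra|].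
      apply Rinv_neq_0_compat; lra. }
  assert (HK' : eta_t * (W + A) * / M = rhsK) by exact HK. clear HK; rename HK' into HK.
  assert (HWA : W + A <> 0).
  { intro E. apply HrK. rewrite <- HK. replace (1 - Wright (- eta_t) (- nu) 1 + A) with (W + A) by reflexivity.
    rewrite E. ring. }
  assert (HMn : M <> 0).
  { intro E. apply HrK. rewrite <- HK. rewrite E, Rinv_0. ring. }
  assert (HA : A = m / (h * lam * G)) by reflexivity.
  assert (Hmueq : mu_t = eta_t).
  { symmetry. apply Hum; auto. unfold rhsM, q. fold W.
    assert (eta_t = rhsK * M / (W + A)).
    { rewrite <- HK. field. auto. }
    change (eta_t / M = rhsM). unfold rhsM, q. fold W. rewrite H. unfold rhsK. rewrite HA. field. repeat split; try lra.
    rewrite HA in HWA. intro E; apply HWA. 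
    replace (W + m / (h * lam * G)) with ((m + h*lam*G*W) / (h*lam*G)) by (field; lra).
    rewrite E. field. lra. }
  split; [exact Hmueq|]. split.
  - intros t _. unfold s2, s3. rewrite Hmueq. reflexivity.
  - intros x t _. unfold u2, u3, q. rewrite Hmueq. fold W. fold A.
    rewrite HA. rewrite HA in HWA. field. repeat split; try lra.
    intro E; apply HWA.
    replace (W + m / (h * lam * G)) with ((W * (h * lam * G) + m) / (h*lam*G)) by (field; lra).
    rewrite E. field. lra.
Qed.
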